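(* Let $1\le p<\infty$ and let $n,m\ge 0$ be integers with $n-m\ge 3$ and $n-m\equiv 1\pmod 2$. Then $$\left[\sum_{i=0}^{\frac{n-m-3}{2}}\binom{n}{i}^p+\binom{n}{\frac{n-m-1}{2}}^p+\frac12\sum_{j=0}^{m}\left(\left[\binom{m}{j}+\binom{n}{\frac{n-m+2j-1}{2}}\right]^p+\left[\binom{m}{j}+\binom{n}{\frac{n-m+2j+1}{2}}\right]^p\right)\right]^{1/p} \le \Big[\sum_{j=0}^{m}\binom{m}{j}^p\Big]^{1/p}+\Big[\sum_{j=0}^{n}\binom{n}{j}^p\Big]^{1/p}.$$
   Context: Binomial coefficients have their usual meaning. *)

(* Defs.v *)
From Stdlib Require Import Reals Lra Lia.
Open Scope R_scope.

(* sum_{i=a}^{b} f i over naturals (empty, i.e. 0, if b < a) *)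
Fixpoint sumR (f : nat -> R) (a len : nat) : R :=
  match len with
  | O => 0
  | S l => f a + sumR f (S a) l
  end.
Definition sum_range (f : nat -> R) (a b : nat) : R :=
  sumR f a (S b - a)%nat.

(* Main.v *)
Require Import Defs.
From Stdlib Require Import Reals Lra Lia.
From HB Require structures.
From mathcomp Require all_boot all_order all_algebra.
From mathcomp Require all_classical all_reals all_analysis.
From mathcomp Require Rstruct Rstruct_topology.
Open Scope R_scope.

Module ConvMod.
Import HB.structures.
Import mathcomp.boot.all_boot mathcomp.order.all_order mathcomp.algebra.all_algebra.
Import mathcomp.classical.all_classical mathcomp.reals.all_reals mathcomp.analysis.all_analysis.
Import mathcomp.reals_stdlib.Rstruct mathcomp.analysis_stdlib.Rstruct_topology.
Import Order.TTheory GRing.Theory Num.Theory.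
Open Scope R_scope.

Lemma RpowerE (x y : R) : Rlt 0 x -> Rpower x y = powR x y.
Proof.
move=> x0; rewrite /Rpower /powR.
have -> : (x == @GRing.zero R) = false.
  apply/eqP => h. have h' : x = 0 by exact h. rewrite h' in x0; lra.
by rewrite RexpE RlnE.
Qed.

Lemma rp_conv (p x y t : R) : Rle 1 p -> Rlt 0 x -> Rlt 0 y -> Rle 0 t -> Rle t 1 ->
  Rpower (t*x+(1-t)*y) p <= t*Rpower x p+(1-t)*Rpower y p.
Proof.
move=> p1 x0 y0 t0 t1.
have hp : (@GRing.one R <= p)%O by apply/RleP.
have h0 : (@GRing.zero R <= t)%O by apply/RleP.
have h1 : (t <= @GRing.one R)%O by apply/RleP.
have xy : 0 < t*x+(1-t)*y.
  destruct (Req_dec t 0) as [->|tn]; first lra.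
  have : 0 < t*x by apply Rmult_lt_0_compat; lra.
  have : 0 <= (1-t)*y by apply Rmult_le_pos; lra.
  lra.
rewrite !RpowerE //.
have := convex_powR hp (Itv01 h0 h1) (x:=x) (y:=y).
rewrite !inE /= !in_itv /= !andbT.
have hx : (@GRing.zero R <= x)%O by apply/RleP; change (0 <= x); lra.
have hy : (@GRing.zero R <= y)%O by apply/RleP; change (0 <= y); lra.
move=> /(_ hx hy) /RleP.
rewrite !convRE /=. move=> H. exact H.
Qed.
End ConvMod.

Definition rp_conv := ConvMod.rp_conv.


Lemma sumR_ext (f g : nat -> R) a l : (forall i, f i = g i) -> sumR f a l = sumR g a l.
Proof. intro H. revert a; induction l; intro a; simpl; [reflexivity|rewrite H, IHl; reflexivity]. Qed.

Lemma sumR_le (f g : nat -> R) a l : (forall i, f i <= g i) -> sumR f a l <= sumR g a l.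
Proof. intro H. revert a; induction l; intro a; simpl; [lra|specialize (IHl (S a)); specialize (H a); lra]. Qed.

Lemma sumR_plus (f g : nat -> R) a l : sumR (fun i => f i + g i) a l = sumR f a l + sumR g a l.
Proof. revert a; induction l; intro a; simpl; [lra|rewrite IHl; lra]. Qed.

Lemma sumR_scal (f : nat -> R) c a l : sumR (fun i => c * f i) a l = c * sumR f a l.
Proof. revert a; induction l; intro a; simpl; [lra|rewrite IHl; lra]. Qed.

Lemma sumR_app (f : nat -> R) a l1 l2 : sumR f a (l1 + l2) = sumR f a l1 + sumR f (a + l1) l2.
Proof.
  revert a; induction l1; intro a; simpl.
  - rewrite Nat.add_0_r; lra.
  - rewrite IHl1. replace (S a + l1)%nat with (a + S l1)%nat by lia. lra.
Qed.

Lemma sumR_pos (f : nat -> R) a l : (forall i, 0 < f i) -> 0 <= sumR f a l.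
Proof. intro H. revert a; induction l; intro a; simpl; [lra|specialize (IHl (S a)); specialize (H a); lra]. Qed.

Lemma sumR_pos' (f : nat -> R) a l : (forall i, 0 < f i) -> 0 < sumR f a (S l).
Proof. intro H. simpl. pose proof (sumR_pos f (S a) l H). specialize (H a). lra. Qed.

Lemma C_pos n k : 0 < C n k.
Proof.
  unfold C. apply Rdiv_lt_0_compat; [apply INR_fact_lt_0|].
  apply Rmult_lt_0_compat; apply INR_fact_lt_0.
Qed.

Lemma Rpower_pos x y : 0 < Rpower x y.
Proof. unfold Rpower; apply exp_pos. Qed.

Lemma Rpower_inv x y : 0 < x -> Rpower (/ x) y = / Rpower x y.
Proof.
  intro Hx. unfold Rpower. rewrite ln_Rinv by exact Hx.
  rewrite <- exp_Ropp. f_equal; ring.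
Qed.

Lemma Rpower_small t p : 1 <= p -> 0 < t -> t <= 1 -> Rpower t p <= t.
Proof.
  intros Hp Ht Ht1. unfold Rpower.
  rewrite <- (exp_ln t) at 2 by exact Ht.
  assert (ln t <= 0).
  { destruct (Req_dec t 1) as [->|]; [rewrite ln_1; lra|].
    left; rewrite <- ln_1; apply ln_increasing; lra. }
  destruct (Req_dec (p * ln t) (ln t)) as [e|]; [rewrite e; lra|].
  left; apply exp_increasing. nra.
Qed.

Lemma key (p A B a b : R) : 1 <= p -> 0 < A -> 0 < B -> 0 < a -> 0 < b ->
  Rpower (a+b) p <= Rpower (A+B) p *
    (A/(A+B) * (Rpower a p / Rpower A p) + B/(A+B) * (Rpower b p / Rpower B p)).
Proof.
  intros Hp HA HB Ha Hb.
  assert (e : a + b = (A+B) * (A/(A+B) * (a * / A) + (1 - A/(A+B)) * (b * / B))).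
  { field; lra. }
  rewrite e. rewrite <- Rpower_mult_distr.
  2: lra.
  2: { apply Rplus_lt_le_0_compat.
       - apply Rmult_lt_0_compat; [apply Rdiv_lt_0_compat; lra|apply Rmult_lt_0_compat; [lra|apply Rinv_0_lt_compat; lra]].
       - apply Rmult_le_pos; [|left; apply Rmult_lt_0_compat; [lra|apply Rinv_0_lt_compat; lra]].
         assert (A/(A+B) <= 1). { apply Rmult_le_reg_r with (A+B); [lra|]. field_simplify; lra. }
         lra. }
  apply Rmult_le_compat_l; [left; apply Rpower_pos|].
  assert (Hl : 0 <= A/(A+B) <= 1).
  { split; [left; apply Rdiv_lt_0_compat; lra|].
    apply Rmult_le_reg_r with (A+B); [lra|]. field_simplify; lra. }
  eapply Rle_trans.
  { apply rp_conv; try lra.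
    - apply Rmult_lt_0_compat; [lra|apply Rinv_0_lt_compat; lra].
    - apply Rmult_lt_0_compat; [lra|apply Rinv_0_lt_compat; lra]. }
  rewrite <- !Rpower_mult_distr by (try lra; apply Rinv_0_lt_compat; lra).
  rewrite !Rpower_inv by lra.
  replace (1 - A/(A+B)) with (B/(A+B)) by (field; lra).
  unfold Rdiv; lra.
Qed.

Lemma key0 (p A B b : R) : 1 <= p -> 0 < A -> 0 < B -> 0 < b ->
  Rpower b p <= Rpower (A+B) p * (B/(A+B) * (Rpower b p / Rpower B p)).
Proof.
  intros Hp HA HB Hb.
  assert (e : b = (A+B) * (B/(A+B) * (b * / B))). { field; lra. }
  rewrite e at 1. 
  assert (0 < B/(A+B)) by (apply Rdiv_lt_0_compat; lra).
  assert (0 < b * / B) by (apply Rmult_lt_0_compat; [lra|apply Rinv_0_lt_compat; lra]).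
  rewrite <- Rpower_mult_distr by (try lra; apply Rmult_lt_0_compat; lra).
  apply Rmult_le_compat_l; [left; apply Rpower_pos|].
  rewrite <- Rpower_mult_distr by lra.
  rewrite <- Rpower_mult_distr by (try lra; apply Rinv_0_lt_compat; lra).
  rewrite Rpower_inv by lra.
  apply Rmult_le_compat_r.
  - left; apply Rmult_lt_0_compat; [apply Rpower_pos|apply Rinv_0_lt_compat, Rpower_pos].
  - apply Rpower_small; try lra.
    apply Rmult_le_reg_r with (A+B); [lra|]. field_simplify; lra.
Qed.


Lemma sumR_shift (f : nat -> R) c a l : sumR (fun j => f (c + j)%nat) a l = sumR f (c + a) l.
Proof.
  revert a; induction l; intro a; simpl; [reflexivity|].
  rewrite IHl. replace (c + S a)%nat with (S (c + a)) by lia. reflexivity.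
Qed.

Lemma Rpower_inv_p x p : 1 <= p -> 0 < x -> Rpower (Rpower x (/ p)) p = x.
Proof. intros. rewrite Rpower_mult. replace (/ p * p) with 1 by (field; lra). apply Rpower_1; lra. Qed.

Lemma Rpower_p_inv x p : 1 <= p -> 0 < x -> Rpower (Rpower x p) (/ p) = x.
Proof. intros. rewrite Rpower_mult. replace (p * / p) with 1 by (field; lra). apply Rpower_1; lra. Qed.

Theorem mainTheorem20 (p : R) (n m : nat) :
  1 <= p ->
  (3 <= n - m)%nat -> Nat.odd (n - m) = true ->
  Rpower
    (sum_range (fun i => Rpower (C n i) p) 0 ((n - m - 3) / 2)
     + Rpower (C n ((n - m - 1) / 2)) p
     + / 2 * sum_range (fun j =>
           Rpower (C m j + C n ((n - m + 2 * j - 1) / 2)) p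
         + Rpower (C m j + C n ((n - m + 2 * j + 1) / 2)) p) 0 m)
    (/ p)
  <= Rpower (sum_range (fun j => Rpower (C m j) p) 0 m) (/ p)
   + Rpower (sum_range (fun j => Rpower (C n j) p) 0 n) (/ p).
Proof.
  intros Hp H3 Hodd.
  apply Nat.odd_spec in Hodd. destruct Hodd as [k Hk].
  assert (Hk1 : (1 <= k)%nat) by lia.
  assert (E1 : ((n-m-3)/2 = k-1)%nat).
  { replace (n-m-3)%nat with ((k-1)*2)%nat by lia. apply Nat.div_mul; lia. }
  assert (E2 : ((n-m-1)/2 = k)%nat).
  { replace (n-m-1)%nat with (k*2)%nat by lia. apply Nat.div_mul; lia. }
  assert (E3 : forall j, ((n-m+2*j-1)/2 = k+j)%nat).
  { intro j. replace (n-m+2*j-1)%nat with ((k+j)*2)%nat by lia. apply Nat.div_mul; lia. }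
  assert (E4 : forall j, ((n-m+2*j+1)/2 = S k+j)%nat).
  { intro j. replace (n-m+2*j+1)%nat with ((S k+j)*2)%nat by lia. apply Nat.div_mul; lia. }
  unfold sum_range. rewrite E1, E2.
  rewrite (sumR_ext (fun j =>
           Rpower (C m j + C n ((n - m + 2 * j - 1) / 2)) p
         + Rpower (C m j + C n ((n - m + 2 * j + 1) / 2)) p) (fun j => Rpower (C m j + C n (k+j)) p + Rpower (C m j + C n (S k+j)) p))
    by (intro j; cbv beta; rewrite E3, E4; reflexivity).
  replace (S (k-1) - 0)%nat with k by lia.
  replace (S m - 0)%nat with (S m) by lia.
  replace (S n - 0)%nat with (S n) by lia.
  set (Pa := fun j => Rpower (C m j) p).
  set (Pb := fun j => Rpower (C n j) p).
  assert (HPa : forall j, 0 < Pa j) by (intro; apply Rpower_pos).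
  assert (HPb : forall j, 0 < Pb j) by (intro; apply Rpower_pos).
  set (Sa := sumR Pa 0 (S m)).
  set (Sb' := sumR Pb 0 k + Pb k + / 2 * sumR (fun j => Pb (k+j)%nat + Pb (S k+j)%nat) 0 (S m)).
  assert (HSa : 0 < Sa) by (apply sumR_pos'; exact HPa).
  assert (HSb' : 0 < Sb').
  { unfold Sb'. pose proof (sumR_pos Pb 0 k HPb). pose proof (HPb k).
    pose proof (sumR_pos (fun j => Pb (k+j)%nat + Pb (S k+j)%nat) 0 (S m)
      ltac:(intro i; pose proof (HPb (k+i)%nat); pose proof (HPb (S k+i)%nat); lra)). nra. }
  set (A := Rpower Sa (/ p)). set (B := Rpower Sb' (/ p)).
  assert (HA : 0 < A) by apply Rpower_pos.
  assert (HB : 0 < B) by apply Rpower_pos.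
  assert (PA : Rpower A p = Sa) by (apply Rpower_inv_p; lra).
  assert (PB : Rpower B p = Sb') by (apply Rpower_inv_p; lra).
  set (K := Rpower (A+B) p).
  set (lam := A/(A+B)). set (mu := B/(A+B)).
  assert (B1 : sumR Pb 0 k <= K * mu / Sb' * sumR Pb 0 k).
  { rewrite <- sumR_scal. apply sumR_le. intro i.
    eapply Rle_trans; [apply (key0 p A B (C n i)); auto; apply C_pos|].
    fold K. fold mu. rewrite PB. unfold Pb. right; field; lra. }
  assert (B2 : Pb k <= K * mu / Sb' * Pb k).
  { eapply Rle_trans; [apply (key0 p A B (C n k)); auto; apply C_pos|].
    fold K. fold mu. rewrite PB. unfold Pb. right; field; lra. }
  assert (B3 : sumR (fun j => Rpower (C m j + C n (k+j)) p + Rpower (C m j + C n (S k+j)) p) 0 (S m)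
     <= 2 * (K * lam / Sa) * Sa + K * mu / Sb' * sumR (fun j => Pb (k+j)%nat + Pb (S k+j)%nat) 0 (S m)).
  { unfold Sa at 2. rewrite <- !sumR_scal, <- sumR_plus. apply sumR_le. intro j.
    pose proof (key p A B (C m j) (C n (k+j)) Hp HA HB (C_pos _ _) (C_pos _ _)).
    pose proof (key p A B (C m j) (C n (S k+j)) Hp HA HB (C_pos _ _) (C_pos _ _)).
    fold K lam mu in H, H0. rewrite PA, PB in H, H0. unfold Pa, Pb.
    eapply Rle_trans; [apply Rplus_le_compat; [exact H|exact H0]|].
    right; field; lra. }
  assert (HL : sumR Pb 0 k + Pb k + / 2 * sumR (fun j => Rpower (C m j + C n (k+j)) p + Rpower (C m j + C n (S k+j)) p) 0 (S m) <= K).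
  { assert (Hsum : K * mu / Sb' * Sb' + K * lam / Sa * Sa = K).
    { unfold lam, mu. field. lra. }
    assert (Hsum2 : K * mu / Sb' * sumR Pb 0 k + K * mu / Sb' * Pb k + / 2 * (2 * (K * lam / Sa) * Sa + K * mu / Sb' * sumR (fun j => Pb (k+j)%nat + Pb (S k+j)%nat) 0 (S m)) = K).
    { assert (Ealg: forall c d X Z Y W : R, c*X + c*Z + /2*(2*d*W + c*Y) = c*(X+Z+/2*Y) + d*W) by (intros; field). rewrite Ealg. exact Hsum. }
    lra. }
  assert (HL0 : 0 < sumR Pb 0 k + Pb k + / 2 * sumR (fun j => Rpower (C m j + C n (k+j)) p + Rpower (C m j + C n (S k+j)) p) 0 (S m)).
  { pose proof (sumR_pos Pb 0 k HPb). pose proof (HPb k).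
    pose proof (sumR_pos (fun j => Rpower (C m j + C n (k+j)) p + Rpower (C m j + C n (S k+j)) p) 0 (S m)
      ltac:(intro i; pose proof (Rpower_pos (C m i + C n (k+i)) p); pose proof (Rpower_pos (C m i + C n (S k+i)) p); lra)). nra. }
  assert (Hp0 : 0 <= / p) by (left; apply Rinv_0_lt_compat; lra).
  eapply Rle_trans.
  { apply Rle_Rpower_l; [exact Hp0|split; [exact HL0|exact HL]]. }
  unfold K. rewrite Rpower_p_inv by lra. fold A.
  apply Rplus_le_compat_l. unfold B.
  apply Rle_Rpower_l; [exact Hp0|split; [exact HSb'|]].
  unfold Sb'. rewrite sumR_plus.
  rewrite (sumR_shift Pb k 0 (S m)), (sumR_shift Pb (S k) 0 (S m)).
  rewrite !Nat.add_0_r.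
  replace (sumR Pb k (S m)) with (Pb k + sumR Pb (S k) m) by reflexivity.
  replace (S m) with (m + 1)%nat by lia.
  rewrite (sumR_app Pb (S k) m 1). simpl (sumR Pb (S k + m) 1).
  replace (S n) with (S k + m + S k)%nat by lia.
  rewrite (sumR_app Pb 0 (S k + m) (S k)), (sumR_app Pb 0 (S k) m).
  rewrite !Nat.add_0_l.
  assert (F1 : sumR Pb 0 (S k) = sumR Pb 0 k + Pb k).
  { replace (S k) with (k + 1)%nat by lia. rewrite sumR_app. simpl. lra. }
  assert (F2 : sumR Pb (S k + m) (S k) = Pb (S k + m)%nat + sumR Pb (S (S k + m)) k) by reflexivity.
  rewrite F1, F2.
  assert (Hsym : Pb (S k + m)%nat = Pb k).
  { unfold Pb. rewrite (pascal_step1 n k) by lia. f_equal. f_equal. lia. }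
  pose proof (sumR_pos Pb (S (S k + m)) k HPb).
  change (S (k + m)) with (S k + m)%nat. rewrite Hsym.
  lra.
Qed.
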